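(* For $k,\ell\in\mathbb Z_{\ge0}$ and $s\in\mathbb C$: $p_+^{(k,\ell)}(t)=\sum_{m=0}^{\ell}k^{\underline m}P_m^{(\ell-m,-m)}(0)t^m$ if $k\ge\ell$, and $=\sum_{m=0}^{k}\ell^{\underline m}P_m^{(k-m,-m)}(0)t^m$ if $k<\ell$; $p_-^{(k,\ell)}(t)=\sum_{m=0}^{\ell}k^{\underline m}P_m^{(-m,\ell-m)}(0)t^m$ if $k\ge\ell$, and $=\sum_{m=0}^{k}\ell^{\underline m}P_m^{(-m,k-m)}(0)t^m$ if $k<\ell$; $p_c^{(s;k)}(t)=\sum_{m=0}^kk^{\underline m}P_m^{(\frac{k+s-2m}2,\frac{k-s-2m}2)}(0)t^m$. In particular $p_c^{(\pm k;k)}(t)=p_\pm^{(k,k)}(t)$.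
   Context: $r^{\underline m}=r(r-1)\cdots(r-m+1)$, $r^{\overline m}=r(r+1)\cdots(r+m-1)$ (empty products $=1$). For complex $a$ and $m\in\mathbb Z_{\ge0}$, $\binom am=a(a-1)\cdots(a-m+1)/m!$. Jacobi polynomials: $P_m^{(\alpha,\beta)}(z)=\sum_{j=0}^m\binom{m+\alpha}{m-j}\binom{m+\beta}{j}\big(\frac{z-1}2\big)^j\big(\frac{z+1}2\big)^{m-j}$ for $\alpha,\beta\in\mathbb C$. Cayley continuants $\mathrm{Cay}_m(x;y)=\sum_{j=0}^m\binom mj(\frac{x+y}2)^{\underline j}(\frac{x-y}2)^{\overline{m-j}}$ (the tridiagonal $m\times m$ determinant with diagonal $x$, superdiagonal $1,\dots,m-1$, subdiagonal $y,y-1,\dots,y-m+2$). Polynomials: $p_\pm^{(k,\ell)}(t)=\sum_{m=0}^{\min(k,\ell)}\frac{(\pm1)^m}{2^m}m!\binom km\binom\ell mt^m$, $p_c^{(s;k)}(t)=\sum_{m=0}^k\frac1{2^m}\binom km\mathrm{Cay}_m(s;k)t^m$. *)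

(* Defs.v *)
From HB Require Import structures.
From mathcomp Require Import all_boot all_order all_algebra.
From mathcomp Require Import complex.
From mathcomp Require Import reals.
Set Implicit Arguments. Unset Strict Implicit. Unset Printing Implicit Defensive.
Import Order.TTheory GRing.Theory Num.Theory.
Local Open Scope ring_scope.

Section Defs.
Variable F : fieldType.

Definition falling (r : F) (m : nat) : F := \prod_(i < m) (r - i%:R).
Definition rising (r : F) (m : nat) : F := \prod_(i < m) (r + i%:R).
Definition binomC (a : F) (m : nat) : F := falling a m / (m`!)%:R.

Definition jacobi (m : nat) (alpha beta z : F) : F :=
  \sum_(j < m.+1) binomC (m%:R + alpha) (m - j) * binomC (m%:R + beta) j
     * ((z - 1) / 2%:R) ^+ j * ((z + 1) / 2%:R) ^+ (m - j).

Definition cay (m : nat) (x y : F) : F :=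
  \sum_(j < m.+1) ('C(m, j))%:R * falling ((x + y) / 2%:R) j
     * rising ((x - y) / 2%:R) (m - j).

Definition p_plus (k l : nat) : {poly F} :=
  \sum_(m < (minn k l).+1)
     ((1 / 2%:R ^+ m) * (m`!)%:R * ('C(k, m))%:R * ('C(l, m))%:R) *: 'X^m.
Definition p_minus (k l : nat) : {poly F} :=
  \sum_(m < (minn k l).+1)
     ((-1) ^+ m / 2%:R ^+ m * (m`!)%:R * ('C(k, m))%:R * ('C(l, m))%:R) *: 'X^m.

Definition p_c (s : F) (k : nat) : {poly F} :=
  \sum_(m < k.+1) ((1 / 2%:R ^+ m) * ('C(k, m))%:R * cay m s k%:R) *: 'X^m.
End Defs.

(* Main.v *)
Require Import Defs.
From HB Require Import structures.
From mathcomp Require Import all_boot all_order all_algebra.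
From mathcomp Require Import complex.
From mathcomp Require Import reals.
From mathcomp Require Import ring.

Import Order.TTheory GRing.Theory Num.Theory.
Local Open Scope ring_scope.

Section H.
Variable F : numFieldType.

Lemma fallingS (x : F) m : falling x m.+1 = falling x m * (x - m%:R).
Proof. by rewrite /falling big_ord_recr. Qed.

Lemma falling_nat (n m : nat) : falling (n%:R : F) m = (n ^_ m)%:R.
Proof.
elim: m => [|m IH]; first by rewrite /falling big_ord0 ffactn0.
rewrite fallingS IH ffactnSr natrM.
case: (leqP m n) => h; first by rewrite natrB.
by rewrite ffact_small // !mul0r.
Qed.

Lemma fact_neq0 m : ((m`!)%:R : F) != 0.
Proof. by rewrite pnatr_eq0 -lt0n fact_gt0. Qed.

Lemma falling_bin (n m : nat) : falling (n%:R : F) m = ('C(n, m))%:R * (m`!)%:R.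
Proof. by rewrite falling_nat -bin_ffact natrM. Qed.

Lemma binomC_nat (n m : nat) : binomC (n%:R : F) m = ('C(n, m))%:R.
Proof. by rewrite /binomC falling_bin mulfK // fact_neq0. Qed.

Lemma binomC0 m : binomC (0 : F) m = (m == 0%N)%:R.
Proof. by by have := binomC_nat 0 m; rewrite bin0n. Qed.

Lemma falling_binomC (x : F) m : falling x m = binomC x m * (m`!)%:R.
Proof. by rewrite /binomC divfK // fact_neq0. Qed.

Lemma rising_falling (x : F) m : rising x m = (-1) ^+ m * falling (- x) m.
Proof.
rewrite /rising /falling.
rewrite (_ : \prod_(i < m) (x + i%:R) = \prod_(i < m) - (- x - i%:R)).
  by rewrite prodrN card_ord.
by apply: eq_bigr => i _; rewrite opprB opprK addrC.
Qed.

Lemma two_neq0 : (2%:R : F) != 0.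
Proof. by rewrite pnatr_eq0. Qed.

Lemma jacobi0 m (a b : F) : jacobi m a b 0 =
  (1 / 2%:R ^+ m) * \sum_(j < m.+1) binomC (m%:R + a) (m - j) * binomC (m%:R + b) j * (-1) ^+ j.
Proof.
rewrite /jacobi mulr_sumr; apply: eq_bigr => j _.
rewrite sub0r add0r.
have h : (2%:R : F) ^+ m = 2%:R ^+ j * 2%:R ^+ (m - j).
  by rewrite -exprD subnKC // -ltnS.
rewrite h !expr_div_n.
have h1 : (2%:R : F) ^+ j != 0 by rewrite expf_neq0 // two_neq0.
have h2 : (2%:R : F) ^+ (m - j) != 0 by rewrite expf_neq0 // two_neq0.
rewrite expr1n.
field.
by rewrite h1 h2.
Qed.

Lemma sumA (l m : nat) : \sum_(j < m.+1) binomC (l%:R : F) (m - j) * binomC 0 j * (-1) ^+ j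
   = ('C(l, m))%:R.
Proof.
rewrite big_ord_recl /= subn0 binomC0 binomC_nat expr0 !mulr1 big1 ?addr0 //.
by move=> i _; rewrite binomC0 /= mulr0 mul0r.
Qed.

Lemma sumB (l m : nat) : \sum_(j < m.+1) binomC (0 : F) (m - j) * binomC (l%:R) j * (-1) ^+ j
   = (-1) ^+ m * ('C(l, m))%:R.
Proof.
rewrite big_ord_recr /= subnn binomC0 binomC_nat mul1r big1 ?add0r; first by rewrite mulrC.
move=> i _; rewrite binomC0.
have -> : (m - i == 0)%N = false by rewrite subn_eq0 leqNgt ltn_ord.
by rewrite !mul0r.
Qed.

Lemma cayE m (x y : F) : cay m x y = (m`!)%:R *
  \sum_(j < m.+1) binomC ((x + y) / 2%:R) (m - j) * binomC ((y - x) / 2%:R) j * (-1) ^+ j.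
Proof.
rewrite /cay mulr_sumr (reindex_inj rev_ord_inj) /=; apply: eq_bigr => j _.
have hj : (j <= m)%N by rewrite -ltnS.
rewrite subSS subKn // bin_sub // rising_falling.
have -> : - ((x - y) / 2%:R) = (y - x) / 2%:R by rewrite -mulNr opprB.
rewrite !falling_binomC -(bin_fact hj) !natrM.
ring.
Qed.
End H.

Lemma main_gen (F : numFieldType) :
  (forall k l : nat, (l <= k)%N ->
     p_plus F k l = \sum_(m < l.+1)
       (falling (k%:R : F) m * jacobi m (l%:R - m%:R) (- m%:R) 0) *: 'X^m)
  /\ (forall k l : nat, (k < l)%N ->
     p_plus F k l = \sum_(m < k.+1)
       (falling (l%:R : F) m * jacobi m (k%:R - m%:R) (- m%:R) 0) *: 'X^m)
  /\ (forall k l : nat, (l <= k)%N ->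
     p_minus F k l = \sum_(m < l.+1)
       (falling (k%:R : F) m * jacobi m (- m%:R) (l%:R - m%:R) 0) *: 'X^m)
  /\ (forall k l : nat, (k < l)%N ->
     p_minus F k l = \sum_(m < k.+1)
       (falling (l%:R : F) m * jacobi m (- m%:R) (k%:R - m%:R) 0) *: 'X^m)
  /\ (forall (s : F) (k : nat),
     p_c s k = \sum_(m < k.+1)
       (falling (k%:R : F) m
          * jacobi m ((k%:R + s - 2%:R * m%:R) / 2%:R)
                     ((k%:R - s - 2%:R * m%:R) / 2%:R) 0) *: 'X^m)
  /\ (forall k : nat, p_c (k%:R : F) k = p_plus F k k
                      /\ p_c (- (k%:R : F)) k = p_minus F k k).
Proof.
have e1 : forall (l m : nat), (m%:R : F) + (l%:R - m%:R) = l%:R.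
  by move=> l m; rewrite addrC subrK.
have e2 : forall (m : nat), (m%:R : F) + - m%:R = 0 by move=> m; rewrite subrr.
split.
  move=> k l hlk; rewrite /p_plus (minn_idPr hlk); apply: eq_bigr => m _.
  congr (_ *: _); rewrite jacobi0 e1 e2 sumA falling_bin; ring.
split.
  move=> k l hlk; rewrite /p_plus (minn_idPl (ltnW hlk)); apply: eq_bigr => m _.
  congr (_ *: _); rewrite jacobi0 e1 e2 sumA falling_bin; ring.
split.
  move=> k l hlk; rewrite /p_minus (minn_idPr hlk); apply: eq_bigr => m _.
  congr (_ *: _); rewrite jacobi0 e1 e2 sumB falling_bin; ring.
split.
  move=> k l hlk; rewrite /p_minus (minn_idPl (ltnW hlk)); apply: eq_bigr => m _.
  congr (_ *: _); rewrite jacobi0 e1 e2 sumB falling_bin; ring.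
have t2 := two_neq0 F.
split.
  move=> s k; rewrite /p_c; apply: eq_bigr => m _.
  congr (_ *: _); rewrite jacobi0 cayE falling_bin.
  have -> : (m%:R : F) + (k%:R + s - 2%:R * m%:R) / 2%:R = (s + k%:R) / 2%:R.
    by field.
  have -> : (m%:R : F) + (k%:R - s - 2%:R * m%:R) / 2%:R = (k%:R - s) / 2%:R.
    by field.
  ring.
move=> k; rewrite /p_c /p_plus /p_minus minnn; split; apply: eq_bigr => m _;
  congr (_ *: _); rewrite cayE.
  have -> : ((k%:R : F) + k%:R) / 2%:R = k%:R by field.
  rewrite subrr mul0r sumA; ring.
have -> : (- (k%:R : F) + k%:R) / 2%:R = 0 by rewrite addNr mul0r.
have -> : ((k%:R : F) - - k%:R) / 2%:R = k%:R by field.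
rewrite sumB; ring.
Qed.

Theorem theorem7p1 (R : realType) :
  (forall k l : nat, (l <= k)%N ->
     p_plus R[i] k l = \sum_(m < l.+1)
       (falling (k%:R : R[i]) m * jacobi m (l%:R - m%:R) (- m%:R) 0) *: 'X^m)
  /\ (forall k l : nat, (k < l)%N ->
     p_plus R[i] k l = \sum_(m < k.+1)
       (falling (l%:R : R[i]) m * jacobi m (k%:R - m%:R) (- m%:R) 0) *: 'X^m)
  /\ (forall k l : nat, (l <= k)%N ->
     p_minus R[i] k l = \sum_(m < l.+1)
       (falling (k%:R : R[i]) m * jacobi m (- m%:R) (l%:R - m%:R) 0) *: 'X^m)
  /\ (forall k l : nat, (k < l)%N ->
     p_minus R[i] k l = \sum_(m < k.+1)
       (falling (l%:R : R[i]) m * jacobi m (- m%:R) (k%:R - m%:R) 0) *: 'X^m)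
  /\ (forall (s : R[i]) (k : nat),
     p_c s k = \sum_(m < k.+1)
       (falling (k%:R : R[i]) m
          * jacobi m ((k%:R + s - 2%:R * m%:R) / 2%:R)
                     ((k%:R - s - 2%:R * m%:R) / 2%:R) 0) *: 'X^m)
  /\ (forall k : nat, p_c (k%:R : R[i]) k = p_plus R[i] k k
                      /\ p_c (- (k%:R : R[i])) k = p_minus R[i] k k).
Proof. exact: (main_gen R[i]). Qed.
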